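(* There is an absolute constant $C>0$ such that for every $N\in\mathbb{N}$, all functions $f_0,f_1\colon\mathbb{Z}\to\mathbb{C}$ with $|f_i|\le1$ supported in $[\pm2N^2]$, and every $f_2\colon\mathbb{Z}\to\mathbb{C}$ with $|f_2|\le1$ supported in $[N]$, \[ \Big|\mathbb{E}_{x\in[\pm2N^2],\,n\in[N]}f_0(x)f_1(x+n^2)f_2(n)\Big|\le CN^{-1/2}\|f_2\|_{U^3}. \]
   Context: $[N]=\{1,\dots,N\}$, $[\pm N]=[-N,N]\cap\mathbb{Z}$, $\mathbb{E}_{a\in A}$ is the average over the finite set $A$. For $f\colon\mathbb{Z}\to\mathbb{C}$ and $h\in\mathbb{Z}$, $\Delta_hf(x)=f(x)\overline{f(x+h)}$, $\Delta_{h_1,\dots,h_s}=\Delta_{h_1}\cdots\Delta_{h_s}$. For finitely supported $f$, the unnormalised Gowers norm is $\|f\|_{U^s}=\big(\sum_{x,h_1,\dots,h_s\in\mathbb{Z}}\Delta_{h_1,\dots,h_s}f(x)\big)^{1/2^s}$. *)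

(* Defs.v *)
From HB Require Import structures.
From mathcomp Require Import all_boot all_order all_algebra.
From mathcomp Require Import complex.
From mathcomp Require Import classical_sets fsbigop reals exp.
Set Implicit Arguments. Unset Strict Implicit. Unset Printing Implicit Defensive.
Import Order.TTheory GRing.Theory Num.Theory.
Local Open Scope ring_scope.

Definition in_pm (M : int) (x : int) : bool := (- M <= x) && (x <= M).
Definition in_1N (N : int) (x : int) : bool := (1 <= x) && (x <= N).

Definition supported_in {V : nmodType} (f : int -> V) (S : int -> bool) : Prop :=
  forall x, f x != 0 -> S x.

Definition Delta (R : rcfType) (h : int) (f : int -> R[i]) : int -> R[i] :=
  fun x => f x * (f (x + h))^*.

(* Σ_{x,h1,h2,h3 ∈ Z} Δ_{h1,h2,h3} f(x), as a finitely supported sum over Z^4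
   (fsbig: the sum over the finite support of the summand). *)
Definition gowers3_sum (R : realType) (f : int -> R[i]) : R[i] :=
  (\sum_(t \in [set: int * int * int * int])
     Delta t.1.1.2 (Delta t.1.2 (Delta t.2 f)) t.1.1.1)%R.

(* unnormalised Gowers U^3 norm: (Σ ...)^(1/8); the sum is a nonnegative real *)
Definition gowersU3 (R : realType) (f : int -> R[i]) : R :=
  powR (complex.Re (gowers3_sum f)) (8%:R^-1).

Definition avg_lemma35 (R : realType) (N : nat) (f0 f1 f2 : int -> R[i]) : R[i] :=
  let M := (2 * N ^ 2)%N in
  ((M.*2.+1 * N)%:R)^-1 *
  \sum_(k < M.*2.+1) \sum_(j < N)
     f0 (k%:Z - M%:Z) * f1 (k%:Z - M%:Z + (j.+1)%:Z ^+ 2) * f2 (j.+1)%:Z.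

(* Main.v *)
Require Import Defs.
From HB Require Import structures.
From mathcomp Require Import all_boot all_order all_algebra.
From mathcomp Require Import complex.
From mathcomp Require Import classical_sets fsbigop reals exp.
From mathcomp Require Import zify ring lra.
Set Implicit Arguments. Unset Strict Implicit. Unset Printing Implicit Defensive.
Import Order.TTheory GRing.Theory Num.Theory.
Local Open Scope ring_scope.

Definition rng (a : int) (n : nat) : seq int := [seq a + i%:Z | i <- iota 0 n].

Lemma mem_rng a n x : (x \in rng a n) = (a <= x) && (x < a + n%:Z).
Proof.
apply/mapP/andP; [case=> i | case=> h1 h2].
  rewrite mem_iota => /andP [_ hi] ->; split; lia.
exists (absz (x - a)); first by rewrite mem_iota; apply/andP; split; lia.
lia.
Qed.

Lemma rng_uniq a n : uniq (rng a n).
Proof.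
rewrite map_inj_uniq ?iota_uniq // => i j /addrI [].
by [].
Qed.

Lemma size_rng a n : size (rng a n) = n.
Proof. by rewrite size_map size_iota. Qed.

Lemma sum_seqT (V : nmodType) (T : choiceType) (r : seq T) (F : T -> V) :
  uniq r -> (forall i, F i != 0 -> i \in r) ->
  \sum_(i <- r) F i = \sum_(i \in [set: T]) F i.
Proof.
move=> ur hr.
have := @bigfs V 0 +%R T r predT F ur.
have -> : ([set` (predT : {pred T})] = [set: T])%classic.
  by apply/seteqP; split => x //.
move=> <- // i _ ir; apply/eqP; apply: contraNT ir; exact: hr.
Qed.

Lemma TS_shift (V : nmodType) (F : int -> V) c :
  \sum_(x \in [set: int]) F (x + c) = \sum_(x \in [set: int]) F x.
Proof.
rewrite [RHS](reindex_fsbigT (fun x => x + c) F) //.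
by exists (fun x => x - c) => x; rewrite ?addrK ?subrK.
Qed.

Lemma rng_shift (V : nmodType) a n b m c (F : int -> V) :
  (forall x, F x != 0 -> (a <= x) && (x < a + n%:Z)) ->
  (forall y, F (y + c) != 0 -> (b <= y) && (y < b + m%:Z)) ->
  \sum_(x <- rng a n) F x = \sum_(y <- rng b m) F (y + c).
Proof.
move=> h1 h2.
rewrite (sum_seqT (rng_uniq _ _)); last by move=> x /h1; rewrite mem_rng.
rewrite (sum_seqT (rng_uniq _ _)) ?TS_shift //.
by move=> x /h2; rewrite mem_rng.
Qed.

Lemma rng_eq (V : nmodType) a n b m (F : int -> V) :
  (forall x, F x != 0 -> (a <= x) && (x < a + n%:Z)) ->
  (forall y, F y != 0 -> (b <= y) && (y < b + m%:Z)) ->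
  \sum_(x <- rng a n) F x = \sum_(y <- rng b m) F y.
Proof.
move=> h1 h2; rewrite (rng_shift (b := b) (m := m) (c := 0) h1) //.
  by apply: eq_bigr => y _; rewrite addr0.
by move=> y; rewrite addr0; apply: h2.
Qed.
Lemma sum_cst (F : nmodType) (I : Type) (r : seq I) (c : F) :
  \sum_(i <- r) c = c *+ size r.
Proof. by elim: r => [|a r IH]; rewrite ?big_nil ?big_cons ?IH ?mulrS. Qed.

Lemma cs_seq (F : numDomainType) (I : Type) (r : seq I) (y : I -> F) :
  (forall i, 0 <= y i) ->
  (\sum_(i <- r) y i) ^+ 2 <= (size r)%:R * \sum_(i <- r) y i ^+ 2.
Proof.
move=> y0.
set S := \sum_(i <- r) y i; set Q := \sum_(i <- r) y i ^+ 2.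
have key : 0 <= \sum_(i <- r) \sum_(j <- r) (y i - y j) ^+ 2.
  apply: sumr_ge0 => i _; apply: sumr_ge0 => j _.
  by apply: real_exprn_even_ge0 => //; rewrite rpredB // ger0_real.
have inner i : \sum_(j <- r) (y i - y j) ^+ 2 =
    y i ^+ 2 *+ size r - (y i * S) *+ 2 + Q.
  rewrite (eq_bigr (fun j => y i ^+ 2 - (y i * y j) *+ 2 + y j ^+ 2)); last first.
    by move=> j _; rewrite sqrrB.
  rewrite big_split /= big_split /= sumrN sum_cst sumrMnl -mulr_sumr //.
have outer : \sum_(i <- r) \sum_(j <- r) (y i - y j) ^+ 2 = (Q *+ size r - S * S) *+ 2.
  rewrite (eq_bigr _ (fun i _ => inner i)) !big_split /= sumrN.
  rewrite !sumrMnl -mulr_suml -/Q -/S sum_cst.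
  rewrite mulrnBl; ring.
move: key; rewrite outer pmulrn_lge0 // subr_ge0 => h.
by rewrite expr2 mulr_natl.
Qed.

Lemma sum_ord_rng (V : nmodType) a m (F : int -> V) :
  \sum_(k < m) F (a + k%:Z) = \sum_(x <- rng a m) F x.
Proof.
rewrite /rng big_map -(big_mkord xpredT (fun k => F (a + k%:Z))).
by rewrite /index_iota subn0.
Qed.

Lemma sum_neq0 (V : nmodType) (I : Type) (r : seq I) (F : I -> V) :
  \sum_(i <- r) F i != 0 -> exists i, F i != 0.
Proof.
elim: r => [|a r IH]; first by rewrite big_nil eqxx.
rewrite big_cons; have [Fa|Fa] := eqVneq (F a) 0; last by exists a.
by rewrite Fa add0r.
Qed.

Lemma mul_neq0 (C : idomainType) (a b : C) : a * b != 0 -> a != 0 /\ b != 0.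
Proof. by rewrite mulf_eq0 negb_or => /andP. Qed.

Section Main.
Variable R : realType.
Local Notation C := (R[i]).
Variables (N : nat) (f0 f1 f2 : int -> C).
Hypothesis N0 : (0 < N)%N.
Hypotheses (b0 : forall x, `|f0 x| <= 1) (b1 : forall x, `|f1 x| <= 1) (b2 : forall x, `|f2 x| <= 1).
Hypothesis s0 : supported_in f0 (in_pm (2 * (N ^ 2)%N)%:Z).
Hypothesis s1 : supported_in f1 (in_pm (2 * (N ^ 2)%N)%:Z).
Hypothesis s2 : supported_in f2 (in_1N N%:Z).

Lemma conj_neq0 (z : C) : z^* != 0 -> z != 0.
Proof. by rewrite conjC_eq0. Qed.

Lemma Delta_neq0 h (g : int -> C) x : Delta h g x != 0 -> g x != 0 /\ g (x + h) != 0.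
Proof. by rewrite /Delta => /mul_neq0 [-> /conj_neq0 ->]. Qed.

Lemma sp0 x : f0 x != 0 -> (- (2 * N ^ 2)%N%:Z <= x) && (x <= (2 * N ^ 2)%N%:Z).
Proof. by move/s0. Qed.
Lemma sp1 x : f1 x != 0 -> (- (2 * N ^ 2)%N%:Z <= x) && (x <= (2 * N ^ 2)%N%:Z).
Proof. by move/s1. Qed.
Lemma sp2 x : f2 x != 0 -> (1 <= x) && (x <= N%:Z).
Proof. by move/s2. Qed.

Lemma sqb (n : int) : 1 <= n <= N%:Z -> 1 <= n ^+ 2 <= (N ^ 2)%N%:Z.
Proof. move=> *; nia. Qed.

Definition X := rng (- (5 * N ^ 2)%N%:Z) (10 * N ^ 2).+1.
Definition Y := rng (- N%:Z) (2 * N).+1.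
Definition M := (2 * N ^ 2)%N.

Definition S := \sum_(x <- X) \sum_(n <- Y) f0 x * f1 (x + n ^+ 2) * f2 n.

Lemma avgE : avg_lemma35 N f0 f1 f2 = ((M.*2.+1 * N)%:R)^-1 * S.
Proof.
rewrite /avg_lemma35 -/M; congr (_ * _).
pose G := fun x : int => \sum_(j < N) f0 x * f1 (x + (1 + j%:Z) ^+ 2) * f2 (1 + j%:Z).
transitivity (\sum_(k < M.*2.+1) G (- M%:Z + k%:Z)).
  apply: eq_bigr => k _; rewrite /G [_ + k%:Z]addrC; apply: eq_bigr => j _.
  by rewrite intS.
rewrite sum_ord_rng /S.
rewrite (@rng_eq _ _ _ (- (5 * N ^ 2)%N%:Z) (10 * N ^ 2).+1); last first.
- move=> y; rewrite /G => /sum_neq0 [j /mul_neq0 [/mul_neq0 [/sp0 hy _] _]]; lia.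
- move=> y; rewrite /G => /sum_neq0 [j /mul_neq0 [/mul_neq0 [/sp0 hy _] _]]; rewrite /M; lia.
apply: eq_bigr => x _.
etransitivity; first exact: (sum_ord_rng 1 N (fun n => f0 x * f1 (x + n ^+ 2) * f2 n)).
apply: rng_eq.
- move=> y /mul_neq0 [_ /sp2 hy]; lia.
- move=> y /mul_neq0 [_ /sp2 hy]; lia.
Qed.

Definition W : C := ((10 * N ^ 2).+1)%:R.
Definition U x := \sum_(n <- Y) f1 (x + n ^+ 2) * f2 n.
Definition V h x := \sum_(n <- Y) (f1 (x + ((n + h) ^+ 2 - n ^+ 2)))^* * Delta h f2 n.
Definition T := \sum_(h <- Y) \sum_(x <- X) f1 x * V h x.

Lemma normsum_le1 (I : Type) (r : seq I) (a b : I -> C) :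
  (forall i, `|a i| <= 1) -> `|\sum_(i <- r) a i * b i| <= \sum_(i <- r) `|b i|.
Proof.
move=> ha; apply: le_trans (ler_norm_sum _ _ _) _.
by apply: ler_sum => i _; rewrite normrM ler_piMl.
Qed.

Lemma cs_norm (I : Type) (r : seq I) (b : I -> C) :
  (\sum_(i <- r) `|b i|) ^+ 2 <= (size r)%:R * \sum_(i <- r) `|b i| ^+ 2.
Proof. by apply: cs_seq => i. Qed.

Lemma stepBC : `|S| ^+ 2 <= W * \sum_(x <- X) `|U x| ^+ 2.
Proof.
have -> : S = \sum_(x <- X) f0 x * U x.
  by apply: eq_bigr => x _; rewrite /U mulr_sumr; apply: eq_bigr => n _; rewrite mulrA.
apply: le_trans (_ : (\sum_(x <- X) `|U x|) ^+ 2 <= _).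
  by apply: lerXn2r; rewrite ?qualifE /= ?sumr_ge0 ?normr_ge0 //; apply: normsum_le1.
by have := cs_norm X U; rewrite /X size_rng.
Qed.

Lemma stepD : \sum_(x <- X) `|U x| ^+ 2 = T.
Proof.
transitivity (\sum_(x <- X) \sum_(n <- Y) \sum_(m <- Y)
   f1 (x + n ^+ 2) * f2 n * (f1 (x + m ^+ 2) * f2 m)^*).
  apply: eq_bigr => x _; rewrite normCK /U rmorph_sum mulr_suml.
  by apply: eq_bigr => n _; rewrite mulr_sumr.
rewrite exchange_big /=.
transitivity (\sum_(n <- Y) \sum_(h <- Y) \sum_(x <- X)
   f1 x * ((f1 (x + ((n + h) ^+ 2 - n ^+ 2)))^* * Delta h f2 n)); last first.
  rewrite /T exchange_big /=; apply: eq_bigr => h _.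
  rewrite exchange_big /=; apply: eq_bigr => x _.
  by rewrite /V mulr_sumr.
apply: eq_bigr => n _; rewrite exchange_big /=.
rewrite (@rng_shift _ _ _ (- N%:Z) (2 * N).+1 n); last first.
- move=> h /sum_neq0 [x /mul_neq0 [/mul_neq0 [_ /sp2 h1] /conj_neq0 /mul_neq0 [_ /sp2 h2]]].
  lia.
- move=> m /sum_neq0 [x /mul_neq0 [_ /conj_neq0 /mul_neq0 [_ /sp2 h2]]].
  lia.
apply: eq_bigr => h _.
rewrite (@rng_shift _ _ _ (- (5 * N ^ 2)%N%:Z) (10 * N ^ 2).+1 (- n ^+ 2)); last first.
- move=> x /mul_neq0 [/mul_neq0 [/sp1 h1 _] _]; lia.
- move=> x /mul_neq0 [/mul_neq0 [/sp1 h1 /sp2 h2] _].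
  have := sqb h2; lia.
apply: eq_bigr => x _.
have e1 : x + - n ^+ 2 + (h + n) ^+ 2 = x + ((n + h) ^+ 2 - n ^+ 2) by ring.
rewrite e1 subrK [h + n]addrC /Delta rmorphM /=.
ring.
Qed.

Definition Hc : C := ((2 * N).+1)%:R.
Definition T2 := \sum_(h <- Y) \sum_(x <- X) `|V h x| ^+ 2.
Definition Gf h k := \sum_(x <- X) (f1 x)^* * f1 (x + 2%:Z * k * h).
Definition D2 h k := \sum_(n <- Y) Delta k (Delta h f2) n.
Definition q := \sum_(h <- Y) \sum_(k <- Y) `|D2 h k|.
Definition Q3 := \sum_(h <- Y) \sum_(k <- Y) `|D2 h k| ^+ 2.

Lemma cs2 (r1 r2 : seq int) (b : int -> int -> C) :
  (\sum_(i <- r1) \sum_(j <- r2) `|b i j|) ^+ 2 <=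
  (size r1 * size r2)%:R * \sum_(i <- r1) \sum_(j <- r2) `|b i j| ^+ 2.
Proof.
have := cs_norm [seq (i, j) | i <- r1, j <- r2] (fun p => b p.1 p.2).
by rewrite !big_allpairs size_allpairs.
Qed.

Lemma stepEF : `|T| ^+ 2 <= Hc * W * T2.
Proof.
apply: le_trans (_ : (\sum_(h <- Y) \sum_(x <- X) `|V h x|) ^+ 2 <= _).
  apply: lerXn2r; first by rewrite qualifE /= normr_ge0.
    by rewrite qualifE /=; apply: sumr_ge0 => h _; apply: sumr_ge0.
  apply: le_trans (ler_norm_sum _ _ _) _.
  by apply: ler_sum => h _; apply: normsum_le1.
have := cs2 Y X V; rewrite /Y /X !size_rng /Hc /W natrM.
done.
Qed.

Lemma stepG : T2 = \sum_(h <- Y) \sum_(k <- Y) Gf h k * D2 h k.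
Proof.
apply: eq_bigr => h _.
transitivity (\sum_(n <- Y) \sum_(k <- Y) \sum_(x <- X)
   ((f1 x)^* * f1 (x + 2%:Z * k * h)) * Delta k (Delta h f2) n); last first.
  rewrite exchange_big /=; apply: eq_bigr => k _.
  rewrite /Gf /D2 mulr_sumr; apply: eq_bigr => n _.
  by rewrite mulr_suml.
transitivity (\sum_(x <- X) \sum_(n <- Y) \sum_(m <- Y)
   (f1 (x + ((n + h) ^+ 2 - n ^+ 2)))^* * Delta h f2 n *
   ((f1 (x + ((m + h) ^+ 2 - m ^+ 2)))^* * Delta h f2 m)^*).
  apply: eq_bigr => x _; rewrite normCK /V rmorph_sum mulr_suml.
  by apply: eq_bigr => n _; rewrite mulr_sumr.
rewrite exchange_big /=.
apply: eq_bigr => n _; rewrite exchange_big /=.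
rewrite (@rng_shift _ _ _ (- N%:Z) (2 * N).+1 n); last first.
- move=> k /sum_neq0 [x /mul_neq0 [/mul_neq0 [_ /Delta_neq0 [/sp2 h1 _]]
     /conj_neq0 /mul_neq0 [_ /Delta_neq0 [/sp2 h2 _]]]].
  lia.
- move=> m /sum_neq0 [x /mul_neq0 [_ /conj_neq0 /mul_neq0 [_ /Delta_neq0 [/sp2 h2 _]]]].
  lia.
apply: eq_bigr => k _.
rewrite (@rng_shift _ _ _ (- (5 * N ^ 2)%N%:Z) (10 * N ^ 2).+1
           (- ((n + h) ^+ 2 - n ^+ 2))); last first.
- move=> x /mul_neq0 [/mul_neq0 [/conj_neq0 /sp1 h1 _] _]; lia.
- move=> x /mul_neq0 [/mul_neq0 [/conj_neq0 /sp1 h1 /Delta_neq0 [/sp2 h2 /sp2 h3]] _].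
  have := sqb h2; have := sqb h3; lia.
apply: eq_bigr => x _.
have e1 : x + - ((n + h) ^+ 2 - n ^+ 2) + ((k + n + h) ^+ 2 - (k + n) ^+ 2) =
  x + 2%:Z * k * h by ring.
rewrite e1 subrK [k + n]addrC /Delta !rmorphM /= !conjCK.
ring.
Qed.

Lemma stepH : `|T2| <= W * q.
Proof.
rewrite stepG /q mulr_sumr.
apply: le_trans (ler_norm_sum _ _ _) _; apply: ler_sum => h _.
rewrite mulr_sumr; apply: le_trans (ler_norm_sum _ _ _) _; apply: ler_sum => k _.
rewrite normrM ler_wpM2r //.
apply: le_trans (ler_norm_sum _ _ _) _.
apply: le_trans (_ : \sum_(x <- X) (1 : C) <= _).
  by apply: ler_sum => x _; rewrite normrM norm_conjC mulr_ile1.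
by rewrite sum_cst /X size_rng /W.
Qed.

Lemma stepI : q ^+ 2 <= Hc * Hc * Q3.
Proof. by have := cs2 Y Y D2; rewrite /Y !size_rng /Hc natrM. Qed.

Lemma memY x : 1 <= x <= N%:Z -> x \in Y.
Proof. by move=> hx; rewrite /Y mem_rng; lia. Qed.

Lemma stepJ : Q3 = gowers3_sum f2.
Proof.
pose r4 := [seq (p, h) | p <- [seq (p', k) | p' <- [seq (n, l) | n <- Y, l <- Y], k <- Y], h <- Y].
have ur4 : uniq r4.
  apply: allpairs_uniq; last by move=> [? ?] [? ?] _ _ [-> ->].
    apply: allpairs_uniq; last by move=> [? ?] [? ?] _ _ [-> ->].
      apply: allpairs_uniq; last by move=> [? ?] [? ?] _ _ [-> ->].
        exact: rng_uniq.
      exact: rng_uniq.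
    exact: rng_uniq.
  exact: rng_uniq.
rewrite /gowers3_sum -(sum_seqT (r := r4)) //; last first.
  move=> [[[n l] k] h] /= /Delta_neq0 [/Delta_neq0 [/Delta_neq0 [/sp2 hn /sp2 hnh]
     /Delta_neq0 [_ /sp2 hnk]] /Delta_neq0 [/Delta_neq0 [_ /sp2 hnl] _]].
  apply: allpairs_f; last by rewrite /Y mem_rng; lia.
  apply: allpairs_f; last by rewrite /Y mem_rng; lia.
  apply: allpairs_f; by rewrite /Y mem_rng; lia.
rewrite /r4 !big_allpairs /=.
transitivity (\sum_(h <- Y) \sum_(n <- Y) \sum_(l <- Y) \sum_(k <- Y)
   Delta l (Delta k (Delta h f2)) n); last first.
  rewrite exchange_big /=; apply: eq_bigr => n _.
  rewrite exchange_big /=; apply: eq_bigr => l _.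
  by rewrite exchange_big.
apply: eq_bigr => h _.
transitivity (\sum_(k <- Y) \sum_(n <- Y) \sum_(l <- Y) Delta l (Delta k (Delta h f2)) n); last first.
  rewrite exchange_big /=; apply: eq_bigr => n _.
  by rewrite exchange_big.
apply: eq_bigr => k _.
rewrite normCK /D2 rmorph_sum mulr_suml; apply: eq_bigr => n _.
rewrite mulr_sumr.
rewrite (@rng_shift _ _ _ (- N%:Z) (2 * N).+1 n); last first.
- move=> l /mul_neq0 [/Delta_neq0 [/Delta_neq0 [/sp2 h1 _] _]
     /conj_neq0 /Delta_neq0 [/Delta_neq0 [/sp2 h2 _] _]].
  lia.
- move=> m /mul_neq0 [_ /conj_neq0 /Delta_neq0 [/Delta_neq0 [/sp2 h2 _] _]].
  lia.
by apply: eq_bigr => l _; rewrite [l + n]addrC.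
Qed.

Lemma eqle (x y : C) : x = y -> x <= y. Proof. by move->. Qed.

Lemma q_ge0 : 0 <= q.
Proof. by apply: sumr_ge0 => h _; apply: sumr_ge0. Qed.

Lemma W_ge0 : 0 <= W. Proof. exact: ler0n. Qed.
Lemma Hc_ge0 : 0 <= Hc. Proof. exact: ler0n. Qed.

Lemma final_bound : `|S| ^+ 8 <= W ^+ 8 * Hc ^+ 4 * gowers3_sum f2.
Proof.
have hT : `|S| ^+ 2 <= W * `|T|.
  have e : `|T| = T.
    by rewrite -stepD ger0_norm //; apply: sumr_ge0 => x _; apply: exprn_ge0.
  rewrite e -stepD; exact: stepBC.
have hT2 : `|T| ^+ 2 <= Hc * W * (W * q).
  apply: le_trans stepEF _; apply: ler_wpM2l; first by rewrite mulr_ge0 ?W_ge0 ?Hc_ge0.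
  have := stepH; rewrite ger0_norm //.
  by apply: sumr_ge0 => h _; apply: sumr_ge0 => x _; apply: exprn_ge0.
have hq := stepI.
rewrite -stepJ.
have nT : 0 <= `|T| by [].
have nS : 0 <= `|S| by [].
apply: le_trans (_ : (W * `|T|) ^+ 4 <= _).
  rewrite (_ : 8 = 2 * 4)%N // exprM.
  by apply: lerXn2r; rewrite ?qualifE /= ?exprn_ge0 ?mulr_ge0 ?W_ge0.
rewrite exprMn (_ : 4 = 2 * 2)%N // [`|T| ^+ _]exprM.
apply: le_trans (_ : W ^+ (2 * 2) * (Hc * W * (W * q)) ^+ 2 <= _).
  apply: ler_wpM2l; first by rewrite exprn_ge0 ?W_ge0.
  by apply: lerXn2r; rewrite ?qualifE /= ?exprn_ge0 ?mulr_ge0 ?W_ge0 ?Hc_ge0 ?q_ge0.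
apply: le_trans (_ : W ^+ 8 * Hc ^+ 2 * q ^+ 2 <= _).
  by apply: eqle; ring.
apply: le_trans (_ : W ^+ 8 * Hc ^+ 2 * (Hc * Hc * Q3) <= _).
  by apply: ler_wpM2l => //; rewrite mulr_ge0 ?exprn_ge0 ?W_ge0 ?Hc_ge0.
by apply: eqle; ring.
Qed.

End Main.

Unset Implicit Arguments.
Set Strict Implicit.

Lemma real_bnd (R : realType) (N : nat) : (0 < N)%N ->
  ((10 * N ^ 2).+1)%:R ^+ 8 * ((2 * N).+1)%:R ^+ 4 * (N%:R) ^+ 4
   <= 5 ^+ 8 * ((((2 * N ^ 2).*2.+1 * N)%:R) ^+ 8 : R).
Proof.
move=> N0.
have n1 : 1 <= (N%:R : R) by rewrite ler1n.
set n : R := N%:R in n1 *.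
have eW : ((10 * N ^ 2).+1)%:R = 10 * n ^+ 2 + 1 :> R.
  by rewrite -[(10 * N ^ 2).+1]/(1 + 10 * N ^ 2)%N natrD natrM natrX addrC.
have eH : ((2 * N).+1)%:R = 2 * n + 1 :> R.
  by rewrite -[(2 * N).+1]/(1 + 2 * N)%N natrD natrM addrC.
have eD : (((2 * N ^ 2).*2.+1 * N)%:R) = (4 * n ^+ 2 + 1) * n :> R.
  rewrite (_ : ((2 * N ^ 2).*2.+1 * N = (1 + 4 * N ^ 2) * N)%N); last first.
    by congr (_ * _)%N; rewrite -muln2; lia.
  by rewrite natrM natrD natrM natrX [1 + _]addrC.
rewrite eW eH eD.
have n0 : 0 <= n by lra.
have n2 : 1 <= n ^+ 2 by rewrite expr2; nra.
apply: le_trans (_ : (11 * n ^+ 2) ^+ 8 * (3 * n) ^+ 4 * n ^+ 4 <= _).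
  apply: ler_wpM2r; first exact: exprn_ge0.
  apply: ler_pM; rewrite ?exprn_ge0 //; first (apply: addr_ge0; rewrite ?mulr_ge0 //; lra); first lra.
    by apply: lerXn2r; rewrite ?qualifE /=; nra.
  by apply: lerXn2r; rewrite ?qualifE /=; nra.
apply: le_trans (_ : 5 ^+ 8 * (4 * n ^+ 3) ^+ 8 <= _); last first.
  apply: ler_wpM2l; first by apply: exprn_ge0; lra.
  by apply: lerXn2r; rewrite ?qualifE /=; nra.
have e1 : (11 * n ^+ 2) ^+ 8 * (3 * n) ^+ 4 * n ^+ 4 = (363 ^+ 4 : R) * (n ^+ 24).
  by ring.
have e2 : 5 ^+ 8 * (4 * n ^+ 3) ^+ 8 = (400 ^+ 4 : R) * (n ^+ 24) by ring.
rewrite e1 e2; apply: ler_wpM2r; first exact: exprn_ge0.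
by apply: lerXn2r; rewrite ?qualifE /=; lra.
Qed.

Local Open Scope complex_scope.
Lemma cM (R : realType) (x y : R) : (x * y)%:C = x%:C * y%:C.
Proof. by rewrite rmorphM. Qed.
Lemma cX (R : realType) (x : R) n : (x ^+ n)%:C = x%:C ^+ n.
Proof. by rewrite rmorphXn. Qed.
Lemma cN (R : realType) n : (n%:R : R)%:C = n%:R.
Proof. by rewrite rmorph_nat. Qed.

Theorem lemma3p5 (R : realType) :
  exists C : R, 0 < C /\
  forall (N : nat) (f0 f1 f2 : int -> R[i]),
    (0 < N)%N ->
    (forall x, `|f0 x| <= 1) -> (forall x, `|f1 x| <= 1) -> (forall x, `|f2 x| <= 1) ->
    supported_in f0 (in_pm (2 * (N ^ 2)%N)%:Z) ->
    supported_in f1 (in_pm (2 * (N ^ 2)%N)%:Z) ->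
    supported_in f2 (in_1N N%:Z) ->
    `|avg_lemma35 N f0 f1 f2| <= (C * powR N%:R (- 2%:R^-1) * gowersU3 f2)%:C.
Proof.
exists 5; split; first by rewrite ltr0n.
move=> N f0 f1 f2 N0 b0 b1 b2 s0 s1 s2.
have hb := final_bound N0 b0 b1 s1 s2.
rewrite (avgE f1 N0 s0 s2).
have G0 : 0 <= gowers3_sum f2.
  rewrite -(stepJ N0 s2).
  by apply: sumr_ge0 => h _; apply: sumr_ge0 => k _; apply: exprn_ge0.
set G := gowers3_sum f2 in hb G0 *.
set g := complex.Re G.
have eG : G = g%:C by rewrite /g RRe_real // ger0_real.
set SS := S N f0 f1 f2 in hb *.
set a := complex.Re `|SS|.
have ea : `|SS| = a%:C by rewrite /a RRe_real // normr_real.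
have a0 : 0 <= a by rewrite -ler0c -ea.
have g0 : 0 <= g by rewrite -ler0c -eG.
set Dn := ((M N).*2.+1 * N)%N.
have eD : ((Dn%:R : R[i]) = (Dn%:R : R)%:C) by rewrite rmorph_nat.
rewrite normrM normfV normr_nat ea eD -fmorphV /= -rmorphM /= lecR.
have hbR : a ^+ 8 <= ((10 * N ^ 2).+1)%:R ^+ 8 * ((2 * N).+1)%:R ^+ 4 * g.
  move: hb; rewrite ea eG /W /Hc -!cN -!cX -!cM.
  by rewrite lecR.
rewrite /gowersU3 -/G -/g.
have n0 : 0 < (N%:R : R) by rewrite ltr0n.
have D0 : 0 < (Dn%:R : R) by rewrite ltr0n /Dn muln_gt0 N0.
have bnd := real_bnd R N N0.
rewrite -(@ler_pXn2r _ 8) //; last first.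
- by rewrite qualifE /= !mulr_ge0 ?powR_ge0.
- by rewrite qualifE /= mulr_ge0 // invr_ge0 ltW.
rewrite exprMn !exprMn.
have p1 : (N%:R `^ (- 2^-1)) ^+ 8 = (N%:R ^+ 4)^-1 :> R.
  rewrite -powR_mulrn ?powR_ge0 // -powRrM.
  have e1 : (- 2^-1 * 8%:R : R) = - 4%:R by field.
  by rewrite e1 powRN powR_mulrn // ltW.
have p2 : (g `^ 8^-1) ^+ 8 = g.
  rewrite -powR_mulrn ?powR_ge0 // -powRrM.
  have e2 : (8^-1 * 8%:R : R) = 1 by field.
  by rewrite e2 powRr1.
rewrite p1 p2 exprVn.
rewrite mulrC ler_pdivrMr ?exprn_gt0 //.
apply: le_trans hbR _.
have -> : 5 ^+ 8 * (N%:R ^+ 4)^-1 * g * Dn%:R ^+ 8 =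
          (5 ^+ 8 * Dn%:R ^+ 8 / N%:R ^+ 4) * g :> R by ring.
apply: ler_wpM2r => //.
by rewrite ler_pdivlMr ?exprn_gt0.
Qed.
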